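(* Let $F:[0,1]^{N}\times[0,1]\to\mathbb{R}$ be a non-constant analytic function. For every $\epsilon\in(0,1]$ such that $\Sigma_{\epsilon}\neq\emptyset$, there exists $\delta\in(0,1]$ such that $(\epsilon,\delta)\in A$.
   Context: ''Analytic'' means real analytic on a neighbourhood of $[0,1]^{N}\times[0,1]$. $\mathcal{F}_{\mathbf{x},\delta}=\{t\in[0,1]:|F(\mathbf{x},t)|\geq\delta\}$. $\Sigma=\{\mathbf{x}\in[0,1]^{N}:F(\mathbf{x},t)=0\ \forall t\in[0,1]\}$, $\Sigma_{\epsilon}=\{\mathbf{x}\in[0,1]^{N}:\operatorname{dist}(\mathbf{x},\Sigma)\geq\epsilon\}$ (with $\Sigma_\epsilon=[0,1]^N$ if $\Sigma=\emptyset$). $A=\{(\epsilon,\delta)\in(0,1]^{2}:\ \forall\mathbf{x}\in\Sigma_{\epsilon},\ \forall\xi\in[0,1],\ (\xi-\tfrac{\epsilon}{2},\xi+\tfrac{\epsilon}{2})\cap\mathcal{F}_{\mathbf{x},\delta}\neq\emptyset\}$. *)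

(* Defs.v *)
From HB Require Import structures.
From mathcomp Require Import all_boot all_order all_algebra.
From mathcomp Require Import all_classical all_reals all_analysis.
Set Implicit Arguments. Unset Strict Implicit. Unset Printing Implicit Defensive.
Import Order.TTheory GRing.Theory Num.Theory.
Import numFieldNormedType.Exports.
Local Open Scope classical_set_scope.
Local Open Scope ring_scope.

Definition monom {R : realType} {n : nat} (a : 'I_n -> nat) (y : 'I_n -> R) : R :=
  \prod_(i < n) y i ^+ a i.

Definition psum {R : realType} {n : nat} (c : ('I_n -> nat) -> R) (y : 'I_n -> R)
  (k : nat) : R :=
  \sum_(a : {ffun 'I_n -> 'I_k.+1} | (\sum_(i < n) (a i : nat) <= k)%N)
     c (fun i => a i : nat) * monom (fun i => a i : nat) y.

Definition abs_psum {R : realType} {n : nat} (c : ('I_n -> nat) -> R) (y : 'I_n -> R)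
  (k : nat) : R :=
  \sum_(a : {ffun 'I_n -> 'I_k.+1} | (\sum_(i < n) (a i : nat) <= k)%N)
     `|c (fun i => a i : nat) * monom (fun i => a i : nat) y|.

Definition analytic_at {R : realType} {n : nat} (f : ('I_n -> R) -> R) (p : 'I_n -> R) :=
  exists r : R, 0 < r /\ exists c : ('I_n -> nat) -> R,
    forall y : 'I_n -> R, (forall i, `|y i - p i| < r) ->
      (exists M : R, forall k, abs_psum c (fun i => y i - p i) k <= M) /\
      ((fun k => psum c (fun i => y i - p i) k) @ \oo --> f y).

Definition uncurryF {R : realType} {N : nat} (F : ('I_N -> R) -> R -> R)
  (p : 'I_N.+1 -> R) : R :=
  F (fun i : 'I_N => p (widen_ord (leqnSn N) i)) (p ord_max).

Definition analytic_nbhd {R : realType} {N : nat} (F : ('I_N -> R) -> R -> R) :=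
  exists eta : R, 0 < eta /\
    forall p : 'I_N.+1 -> R, (forall i, - eta < p i < 1 + eta) ->
      analytic_at (uncurryF F) p.

Definition cube {R : realType} {n : nat} (x : 'I_n -> R) : Prop :=
  forall i, 0 <= x i <= 1.

Definition nonconstant {R : realType} {N : nat} (F : ('I_N -> R) -> R -> R) :=
  exists (x y : 'I_N -> R) (t s : R),
    [/\ cube x, 0 <= t <= 1, cube y, 0 <= s <= 1 & F x t <> F y s].

Definition eucl {R : realType} {n : nat} (x y : 'I_n -> R) : R :=
  Num.sqrt (\sum_(i < n) (x i - y i) ^+ 2).

Definition dist_set {R : realType} {n : nat} (x : 'I_n -> R) (S : set ('I_n -> R)) : R :=
  inf [set eucl x y | y in S].

Definition Sigma {R : realType} {N : nat} (F : ('I_N -> R) -> R -> R) : set ('I_N -> R) :=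
  [set x | cube x /\ forall t : R, 0 <= t <= 1 -> F x t = 0].

(* Sigma_eps, with the convention Sigma_eps = [0,1]^N when Sigma is empty *)
Definition Sigma_eps {R : realType} {N : nat} (F : ('I_N -> R) -> R -> R) (eps : R)
  : set ('I_N -> R) :=
  [set x | cube x /\ (Sigma F = set0 \/ eps <= dist_set x (Sigma F))].

Definition Fset {R : realType} {N : nat} (F : ('I_N -> R) -> R -> R) (x : 'I_N -> R)
  (delta : R) : set R :=
  [set t | 0 <= t <= 1 /\ delta <= `|F x t|].

Definition inA {R : realType} {N : nat} (F : ('I_N -> R) -> R -> R) (eps delta : R) : Prop :=
  [/\ 0 < eps <= 1, 0 < delta <= 1 &
    forall x, Sigma_eps F eps x -> forall xi : R, 0 <= xi <= 1 ->
      exists t : R, xi - eps / 2 < t < xi + eps / 2 /\ Fset F x delta t].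

(* Main.v *)
Require Import Defs.
From HB Require Import structures.
From mathcomp Require Import all_boot all_order all_algebra.
From mathcomp Require Import all_classical all_reals all_analysis.
From mathcomp Require Import ring lra.
Import Order.TTheory GRing.Theory Num.Theory.
Import numFieldNormedType.Exports.
Set Implicit Arguments. Unset Strict Implicit.
Local Open Scope classical_set_scope.
Local Open Scope ring_scope.

Section Gen.
Variable R : realType.
Variable n : nat.

Lemma lim_bound (u : nat -> R) (L C B : R) (m : nat) :
  u @ \oo --> L -> (forall k, (m <= k)%N -> `|u k - C| <= B) -> `|L - C| <= B.
Proof.
move=> uL hb.
have h : (fun k => `|u k - C|) @ \oo --> `|L - C|.
  apply: cvg_norm; apply: cvgB => //; exact: cvg_cst.
apply: (closed_cvg (fun x : R => x <= B) (@closed_le R B) _ _ h).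
by exists m => // k /= hk; apply: hb.
Qed.

Lemma monom_ge0 (a : 'I_n -> nat) (w : R) : 0 <= w -> 0 <= monom a (fun=> w).
Proof. by move=> w0; apply: prodr_ge0 => i _; apply: exprn_ge0. Qed.

Lemma monom_bound (a : 'I_n -> nat) (v : 'I_n -> R) (rho w : R) :
  0 <= rho <= w -> 0 < w -> (forall i, `|v i| <= rho) -> (exists j, a j != 0%N) ->
  `|monom a v| <= rho / w * monom a (fun=> w).
Proof.
move=> /andP[r0 rw] w0 hv [j aj].
rewrite /monom normr_prod.
have q0 : 0 <= rho / w by rewrite divr_ge0 // ltW.
have q1 : rho / w <= 1 by rewrite ler_pdivrMr // mul1r.
apply: (@le_trans _ _ (\prod_(i < n) ((rho / w) ^+ a i * w ^+ a i))).
  apply: ler_prod => i _; rewrite normr_ge0 /= normrX -exprMn divfK ?gt_eqF //.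
  by apply: lerXn2r; rewrite ?nnegrE //.
rewrite big_split /=; apply: ler_wpM2r; first by apply: prodr_ge0 => i _; apply: exprn_ge0; rewrite ltW.
rewrite (bigD1 j) //=.
apply: (@le_trans _ _ ((rho / w) ^+ a j * 1)).
  apply: ler_wpM2l; first exact: exprn_ge0.
  by apply: prodr_ile1 => i _; rewrite exprn_ge0 // exprn_ile1.
rewrite mulr1; have -> : rho / w = (rho / w) ^+ 1 by rewrite expr1.
by apply: ler_wiXn2l; rewrite // lt0n.
Qed.

Definition ANP (c : ('I_n -> nat) -> R) (f : ('I_n -> R) -> R) (p : 'I_n -> R) (r : R) :=
  forall y, (forall i, `|y i - p i| < r) ->
      (exists M : R, forall k, abs_psum c (fun i => y i - p i) k <= M) /\
      ((fun k => psum c (fun i => y i - p i) k) @ \oo --> f y).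

Lemma ANP_M c f p r : 0 < r -> ANP c f p r ->
  exists M, 0 <= M /\ forall k, abs_psum c (fun=> r / 2) k <= M.
Proof.
move=> r0 Han.
have hd : forall i, `|p i + r / 2 - p i| < r.
  by move=> i; rewrite addrAC subrr add0r ger0_norm ?ltr_pdivrMr ?ltr_pMr ?ltr1n // divr_ge0 // ltW.
have [[M hM] _] := Han (fun i => p i + r / 2) hd.
have ez : (fun i => p i + r / 2 - p i) = fun=> r / 2.
  by apply/funext => i; rewrite addrAC subrr add0r.
rewrite ez in hM; exists M; split => //.
apply: le_trans (hM 0%N); apply: sumr_ge0 => a _; exact: normr_ge0.
Qed.

Lemma cont_core c f p r : 0 < r -> ANP c f p r ->
  exists M, 0 <= M /\ forall rho y, 0 <= rho <= r / 2 -> (forall i, `|y i - p i| <= rho) ->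
   `|f y - c (fun=> 0%N)| <= rho / (r / 2) * M.
Proof.
move=> r0 Han; have [M [M0 hM]] := ANP_M r0 Han.
exists M; split => // rho y /andP[rho0 rhow] hy.
set w := r / 2.
have w0 : 0 < w by rewrite divr_gt0.
have wr : w < r by rewrite /w ltr_pdivrMr ?ltr_pMr ?ltr1n.
have [_ hc] := Han y (fun i => le_lt_trans (hy i) (le_lt_trans rhow wr)).
apply: (lim_bound (m:=0%N) hc) => k _.
set a0 : {ffun 'I_n -> 'I_k.+1} := [ffun => ord0].
have Pa0 : (\sum_(i < n) (a0 i : nat) <= k)%N.
  by rewrite big1 // => i _; rewrite ffunE.
have ea0 : (fun i => (a0 i : nat)) = fun=> 0%N by apply/funext => i; rewrite ffunE.
rewrite /psum (bigD1 a0) //= ea0.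
have -> : monom (fun=> 0%N) (fun i => y i - p i) = 1 by rewrite /monom big1.
rewrite mulr1 addrAC subrr add0r.
apply: (le_trans (ler_norm_sum _ _ _)).
apply: (@le_trans _ _ (rho / w * \sum_(a : {ffun 'I_n -> 'I_k.+1} | (\sum_(i < n) (a i : nat) <= k)%N && (a != a0))
     `|c (fun i => a i : nat) * monom (fun i => a i : nat) (fun=> w)|)).
  rewrite mulr_sumr; apply: ler_sum => a /andP[_ na].
  have [j hj] : exists j, (a j : nat) != 0%N.
    apply/existsP; apply: contraR na; rewrite negb_exists => /forallP h.
    apply/eqP/ffunP => i; apply/val_inj; rewrite ffunE /=.
    by have := h i; rewrite negbK => /eqP.
  rewrite !normrM mulrCA; apply: ler_wpM2l; first exact: normr_ge0.
  rewrite (ger0_norm (monom_ge0 _ (ltW w0))).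
  apply: monom_bound => //; [by rewrite rho0 | by exists j].
apply: ler_wpM2l; first by rewrite divr_ge0 // ltW.
apply: le_trans (hM k); rewrite /abs_psum [X in _ <= X](bigD1 a0) //=.
by apply: ler_wpDl.
Qed.
Lemma monom_pure (a : 'I_n -> nat) (m0 : 'I_n) (u : 'I_n -> R) :
  (forall i, i != m0 -> a i = 0%N) -> monom a u = u m0 ^+ a m0.
Proof.
move=> h; rewrite /monom (bigD1 m0) //= big1 ?mulr1 // => i hi.
by rewrite h // expr0.
Qed.

Lemma monom_impure (a : 'I_n -> nat) (m0 i : 'I_n) (s : R) :
  i != m0 -> a i != 0%N -> monom a (fun j => if j == m0 then s else 0) = 0.
Proof.
move=> hi ai; rewrite /monom (bigD1 i) //= (negbTE hi) expr0n.
by rewrite (negbTE ai) mul0r.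
Qed.

Lemma pure_eq (a : 'I_n -> nat) (m0 : 'I_n) :
  (forall i, i != m0 -> a i = 0%N) -> a = fun i => if i == m0 then a m0 else 0%N.
Proof.
move=> h; apply/funext => i; case: eqP => [->//|/eqP ne]; exact: h.
Qed.

Lemma pure_or (a : 'I_n -> nat) (m0 : 'I_n) :
  (exists i, i != m0 /\ a i != 0%N) \/ (forall i, i != m0 -> a i = 0%N).
Proof.
have [h|h] := pselect (exists i, i != m0 /\ a i != 0%N); [by left|right].
move=> i hi; case: (eqVneq (a i) 0%N) => // ne; exfalso; apply: h; by exists i.
Qed.

Lemma ident_core c f p r (m0 : 'I_n) : 0 < r -> ANP c f p r ->
  (forall eta, 0 < eta -> exists s, 0 < `|s| < eta /\
      f (fun i => if i == m0 then p i + s else p i) = 0) ->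
  forall s, `|s| < r -> f (fun i => if i == m0 then p i + s else p i) = 0.
Proof.
move=> r0 Han Hacc.
have [M [M0 hM]] := ANP_M r0 Han.
set w := r / 2.
have w0 : 0 < w by rewrite divr_gt0.
have wr : w < r by rewrite /w ltr_pdivrMr ?ltr_pMr ?ltr1n.
pose e s := fun i => if i == m0 then p i + s else p i.
have ev s : (fun i => e s i - p i) = fun i => if i == m0 then s else 0.
  by apply/funext => i; rewrite /e; case: eqP => _; rewrite ?subrr // addrAC subrr add0r.
have edom s : `|s| < r -> forall i, `|e s i - p i| < r.
  by move=> hs i; rewrite /e; case: eqP => _; rewrite ?subrr ?normr0 // addrAC subrr add0r.
pose d j := c (fun i => if i == m0 then j else 0%N).
have D : forall j, d j = 0.
  elim/ltn_ind => m IH.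
  have B : forall s, `|s| <= w ->
      `|f (e s) - d m * s ^+ m| <= (`|s| / w) ^+ m.+1 * M.
    move=> s sw.
    have [_ hc] := Han (e s) (edom s (le_lt_trans sw wr)).
    apply: (lim_bound (m:=m) hc) => k mk.
    rewrite ev.
    set am : {ffun 'I_n -> 'I_k.+1} := [ffun i => if i == m0 then inord m else ord0].
    have ea : (fun i => (am i : nat)) = fun i => if i == m0 then m else 0%N.
      by apply/funext => i; rewrite ffunE; case: eqP => _ //=; rewrite inordK // ltnS.
    have Pam : (\sum_(i < n) (am i : nat) <= k)%N.
      rewrite (eq_bigr (fun i => if i == m0 then m else 0%N)); last first.
        by move=> i _; rewrite ffunE; case: eqP => _ //=; rewrite inordK // ltnS.
      by rewrite (bigD1 m0) //= eqxx big1 ?addn0 // => i /negbTE ->.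
    rewrite /psum (bigD1 am) //= ea (@monom_pure _ m0); last by move=> i /negbTE ->.
    rewrite eqxx addrAC subrr add0r -/(d m).
    have q0 : 0 <= `|s| / w by rewrite divr_ge0 // ltW.
    have q1 : `|s| / w <= 1 by rewrite ler_pdivrMr // mul1r.
    have es : `|s| = (`|s| / w) * w by rewrite divfK // gt_eqF.
    set q := `|s| / w in q0 q1 es *.
    apply: (le_trans (ler_norm_sum _ _ _)).
    apply: (@le_trans _ _ ((`|s| / w) ^+ m.+1 * \sum_(a : {ffun 'I_n -> 'I_k.+1} | (\sum_(i < n) (a i : nat) <= k)%N && (a != am))
       `|c (fun i => a i : nat) * monom (fun i => a i : nat) (fun=> w)|)).
      rewrite mulr_sumr; apply: ler_sum => a /andP[_ na].
      have hq : 0 <= (`|s| / w) ^+ m.+1 * `|c (fun i => a i : nat) * monom (fun i => a i : nat) (fun=> w)|.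
        by rewrite mulr_ge0 // exprn_ge0.
      have [[i [hi ai]]|hp] := pure_or (fun i => a i : nat) m0.
        by rewrite (monom_impure s hi ai) mulr0 normr0.
      have [jm|] := ltnP (a m0) m.
        have -> : c (fun i => a i : nat) = 0 by rewrite (pure_eq hp) -/(d (a m0)) IH.
        by rewrite !mul0r !normr0 mulr0.
      rewrite leq_eqVlt => /orP[/eqP jm|jm].
        exfalso; move/negP: na; apply; apply/eqP/ffunP => i; apply/val_inj.
        rewrite ffunE; case: eqP => [->|/eqP ne] /=; first by rewrite inordK ?jm // ltnS.
        by rewrite hp.
      rewrite !(@monom_pure _ m0) // eqxx !normrM (ger0_norm (exprn_ge0 _ (ltW w0))).
      rewrite mulrCA; apply: ler_wpM2l; first exact: normr_ge0.
      rewrite normrX.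
      rewrite {1}es exprMn; apply: ler_wpM2r; first by apply: exprn_ge0; rewrite ltW.
      by apply: ler_wiXn2l.
    apply: ler_wpM2l; first by apply: exprn_ge0.
    apply: le_trans (hM k); rewrite /abs_psum [X in _ <= X](bigD1 am) //=.
    by apply: ler_wpDl.
  apply/eqP; apply/negPn/negP => dm0.
  have ad0 : 0 < `|d m| by rewrite normr_gt0.
  set K := M / w ^+ m.+1.
  have K0 : 0 <= K by rewrite divr_ge0 // exprn_ge0 // ltW.
  have eta0 : 0 < Num.min w (`|d m| / (K + 1)).
    by rewrite lt_min w0 divr_gt0 // ltr_wpDl.
  have [s [/andP[s0 seta] fs]] := Hacc _ eta0.
  have sw : `|s| <= w by apply: ltW; apply: lt_le_trans seta _; rewrite ge_min lexx.
  have sd : `|s| < `|d m| / (K + 1) by apply: lt_le_trans seta _; rewrite ge_min lexx orbT.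
  have := B s sw; rewrite -/(e s) fs sub0r normrN normrM normrX.
  rewrite expr_div_n exprS -mulrA mulrCA -/K mulrA => h.
  have h2 : `|d m| <= `|s| * K.
    rewrite -(@ler_pM2r _ (`|s| ^+ m)) ?exprn_gt0 //.
    apply: le_trans h _; rewrite /K le_eqVlt; apply/orP; left; apply/eqP; ring.
  have : `|s| * K < `|d m|.
    apply: le_lt_trans (_ : `|s| * K <= `|s| * (K + 1)) _.
      by rewrite ler_wpM2l // lerDl.
    by rewrite -ltr_pdivlMr // ltr_wpDl.
  by rewrite ltNge h2.
move=> s hs.
have [_ hc] := Han (e s) (edom s hs).
have H0 : `|f (e s) - 0| <= 0.
  apply: (lim_bound (m:=0%N) hc) => k _.
  rewrite ev subr0 normr_le0 /psum big1 // => a _.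
  have [[i [hi ai]]|hp] := pure_or (fun i => a i : nat) m0.
    by rewrite (monom_impure s hi ai) mulr0.
  have -> : c (fun i => a i : nat) = 0 by rewrite (pure_eq hp) -/(d (a m0)) D.
  by rewrite mul0r.
by move: H0; rewrite subr0 normr_le0 => /eqP.
Qed.
End Gen.
Section Conn.
Variable R : realType.

Definition accum (g : R -> R) (u : R) :=
  forall eta, 0 < eta -> exists v, 0 < `|v - u| < eta /\ g v = 0.

Definition locH (g : R -> R) :=
  forall u, 0 <= u <= 1 -> accum g u -> exists r, 0 < r /\ forall v, `|v - u| < r -> g v = 0.

Lemma conn_right (g : R -> R) a b : locH g ->
  0 <= a -> a < b -> b <= 1 -> (forall v, a < v < b -> g v = 0) ->
  forall v, (a + b) / 2 <= v <= 1 -> g v = 0.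
Proof.
move=> H a0 ab b1 Hz.
set c := (a + b) / 2.
have ac : a < c by rewrite /c; lra.
have cb : c < b by rewrite /c; lra.
pose S := [set u | c <= u <= 1 /\ forall v, c <= v <= u -> g v = 0].
have Sc : S c.
  split; first by apply/andP; split; [exact: lexx| rewrite /c; lra].
  move=> v /andP[h1 h2]; have -> : v = c by apply/eqP; rewrite eq_le h1 h2.
  by apply: Hz; rewrite ac cb.
have ub1 : ubound S 1 by move=> u [/andP[_ ->]].
have hs : has_sup S by split; [exists c | exists 1].
set us := sup S.
have cus : c <= us by apply: sup_upper_bound.
have us1 : us <= 1 by apply: ge_sup => //; exists c.
have F1 : forall v, c <= v < us -> g v = 0.
  move=> v /andP[cv vus].
  have huv : 0 < us - v by rewrite subr_gt0.
  have [u [_ Su] hu] := sup_adherent huv hs.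
  apply: Su; rewrite cv /=; apply: ltW; move: hu; rewrite /us; lra.
have F2 : forall v, a < v < us -> g v = 0.
  move=> v /andP[av vus]; have [vc|cv] := ltP v c.
    by apply: Hz; rewrite av /=; lra.
  by apply: F1; rewrite cv.
have acc : accum g us.
  move=> eta eta0; set m := Num.min eta (us - a).
  have m1 : m <= eta by rewrite /m ge_min lexx.
  have m2 : m <= us - a by rewrite /m ge_min lexx orbT.
  have m0 : 0 < m by rewrite /m lt_min eta0 /=; lra.
  exists (us - m / 2); split.
    have -> : us - m / 2 - us = - (m / 2) by ring.
    rewrite normrN ger0_norm; last by lra.
    apply/andP; split; lra.
  apply: F2; apply/andP; split; lra.
have us01 : 0 <= us <= 1 by apply/andP; split; lra.
have [r [r0 Hr]] := H us us01 acc.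
have us_eq : us = 1.
  apply/eqP; rewrite eq_le us1 /=; rewrite leNgt; apply/negP => lt1.
  set u' := Num.min 1 (us + r / 2).
  have u'1 : u' <= 1 by rewrite /u' ge_min lexx.
  have u'2 : u' <= us + r / 2 by rewrite /u' ge_min lexx orbT.
  have u'3 : us < u' by rewrite /u' lt_min lt1 /=; lra.
  have Su' : S u'.
    split; first by apply/andP; split; lra.
    move=> v /andP[cv vu]; have [vus|usv] := ltP v us.
      by apply: F1; rewrite cv.
    by apply: Hr; rewrite ger0_norm; lra.
  have := sup_upper_bound hs Su'; rewrite -/us; lra.
move=> v /andP[cv v1]; have [vus|usv] := ltP v us.
  by apply: F1; rewrite cv.
by apply: Hr; rewrite ger0_norm; lra.
Qed.

Lemma conn (g : R -> R) a b : locH g ->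
  0 <= a -> a < b -> b <= 1 -> (forall v, a < v < b -> g v = 0) ->
  forall v, 0 <= v <= 1 -> g v = 0.
Proof.
move=> H a0 ab b1 Hz v /andP[v0 v1].
have [cv|vc] := leP ((a + b) / 2) v.
  by apply: (conn_right H a0 ab b1 Hz); rewrite cv.
pose h := fun v => g (1 - v).
have Hh : locH h.
  move=> u /andP[u0 u1] acc.
  have hu : 0 <= 1 - u <= 1 by apply/andP; split; lra.
  have acc' : accum g (1 - u).
    move=> eta eta0; have [w [hw hg]] := acc eta eta0.
    exists (1 - w); split => //.
    have -> : 1 - w - (1 - u) = - (w - u) by ring.
  by rewrite normrN.
  have [r [r0 Hr]] := H (1 - u) hu acc'.
  exists r; split => // w hw; apply: Hr.
  have -> : 1 - w - (1 - u) = - (w - u) by ring.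
  by rewrite normrN.
have := conn_right (a := 1 - b) (b := 1 - a) Hh _ _ _ _ (v := 1 - v).
rewrite /h (_ : 1 - (1 - v) = v); last by ring.
apply.
- lra.
- lra.
- lra.
- move=> w /andP[h1 h2]; apply: Hz; apply/andP; split; lra.
- apply/andP; split; lra.
Qed.
End Conn.
Section Clu.
Import ArrowAsProduct.
Variable R : realType.

Lemma cube_cluster (n : nat) (u : nat -> 'I_n -> R) :
  (forall k i, 0 <= u k i <= 1) ->
  exists q : 'I_n -> R, (forall i, 0 <= q i <= 1) /\
    forall d, 0 < d -> forall m, exists k, (m <= k)%N /\ forall i, `|u k i - q i| < d.
Proof.
move=> hu.
have K := @tychonoff _ (fun _ : 'I_n => R) (fun _ => `[(0:R), 1]%classic) (fun _ => @segment_compact R 0 1).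
have Ku : (u @ \oo) [set f : 'I_n -> R | forall i, `[(0:R), 1]%classic (f i)].
  by exists 0%N => // k _ i /=; rewrite in_itv /= hu.
have [q [Kq clq]] := K _ _ Ku.
exists q; split.
  by move=> i; have := Kq i; rewrite /= in_itv.
move=> d d0 m.
have box : nbhs q [set g : 'I_n -> R | forall i, `|g i - q i| < d].
  have FF : Filter (nbhs q) by apply: nbhs_filter.
  apply: (@filter_forall _ _ (fun i (g : 'I_n -> R) => `|g i - q i| < d) _ FF) => i.
  have := @proj_continuous _ (fun=> R) i q (ball (q i) d) (nbhsx_ballx _ _ d0).
  move=> h; apply: (@filterS _ _ FF _ _ _ h) => g /=; rewrite /ball /= distrC //.
have A : (u @ \oo) [set u k | k in [set k | (m <= k)%N]].
  by exists m => // k /= mk; exists k.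
have [g [[k mk <-] hg]] := clq _ _ A box.
by exists k; split.
Qed.
End Clu.

Section Main.
Variable R : realType.
Variable N : nat.
Variable F : ('I_N -> R) -> R -> R.

Definition xof (q : 'I_N.+1 -> R) : 'I_N -> R := fun j => q (lift ord_max j).
Definition pt (x : 'I_N -> R) (t : R) : 'I_N.+1 -> R :=
  fun i => if unlift ord_max i is Some j then x j else t.

Lemma pt_max x t : pt x t ord_max = t.
Proof. by rewrite /pt unlift_none. Qed.

Lemma xof_pt x t : xof (pt x t) = x.
Proof. by apply/funext => j; rewrite /xof /pt liftK. Qed.

Lemma widen_lift (j : 'I_N) : widen_ord (leqnSn N) j = lift ord_max j.
Proof. by apply/val_inj; rewrite /= /bump leqNgt ltn_ord. Qed.

Lemma uncurry_pt x t : uncurryF F (pt x t) = F x t.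
Proof.
rewrite /uncurryF pt_max; congr F; apply/funext => j.
by rewrite widen_lift /pt liftK.
Qed.

Lemma pt_shift x u s :
  (fun i => if i == ord_max then pt x u i + s else pt x u i) = pt x (u + s).
Proof.
apply/funext => i; case: (unliftP ord_max i) => [j ->|->].
  by rewrite eq_sym (negbTE (neq_lift _ _)) /pt liftK.
by rewrite eqxx !pt_max.
Qed.

Lemma anal_pt x t : analytic_nbhd F -> cube x -> 0 <= t <= 1 ->
  exists r c, 0 < r /\ ANP c (uncurryF F) (pt x t) r.
Proof.
move=> [eta [eta0 H]] cx t01.
have [r [r0 [c hc]]] : analytic_at (uncurryF F) (pt x t).
  apply: H => i; case: (unliftP ord_max i) => [j ->|->].
    rewrite /pt liftK; have /andP[h1 h2] := cx j; apply/andP; split; lra.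
  rewrite pt_max; move/andP: t01 => [h1 h2]; apply/andP; split; lra.
by exists r, c.
Qed.

Lemma cont_x x t : analytic_nbhd F -> cube x -> 0 <= t <= 1 ->
  forall e, 0 < e -> exists rho, 0 < rho /\
    forall x', (forall j, `|x' j - x j| < rho) -> `|F x' t - F x t| < e.
Proof.
move=> Han cx t01 e e0.
have [r [c [r0 HA]]] := anal_pt Han cx t01.
have [M [M0 hb]] := cont_core r0 HA.
set w := r / 2.
have w0 : 0 < w by rewrite divr_gt0.
have z0 : (0:R) <= 0 <= r / 2 by apply/andP; split; lra.
have h0 : forall i, `|pt x t i - pt x t i| <= 0 by move=> i; rewrite subrr normr0.
have hx : F x t = c (fun=> 0%N).
  have := hb 0 (pt x t) z0 h0.
  by rewrite !mul0r uncurry_pt normr_le0 subr_eq0 => /eqP.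
have M1 : 0 < M + 1 by lra.
set rho := Num.min w (e / (M + 1) * w).
have rho0 : 0 < rho by rewrite lt_min w0 /= mulr_gt0 // divr_gt0.
exists rho; split => // x' hx'.
have rw : 0 <= rho <= r / 2 by rewrite ltW //= ge_min le_refl.
have hy : forall i, `|pt x' t i - pt x t i| <= rho.
  move=> i; case: (unliftP ord_max i) => [j ->|->].
    by rewrite /pt liftK ltW.
  by rewrite !pt_max subrr normr0 ltW.
have := hb rho (pt x' t) rw hy; rewrite uncurry_pt -hx => h.
have h1 : rho / w <= e / (M + 1).
  by rewrite ler_pdivrMr // ge_min lexx orbT.
have h2 : e / (M + 1) * M < e.
  by rewrite mulrAC ltr_pdivrMr // ltr_pM2l //; lra.
apply: le_lt_trans h _; apply: le_lt_trans h2; exact: ler_wpM2r.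
Qed.
Lemma locH_x x : analytic_nbhd F -> cube x -> locH (fun v => F x v).
Proof.
move=> Han cx u u01 acc.
have [r [c [r0 HA]]] := anal_pt Han cx u01.
have Hacc : forall eta, 0 < eta -> exists s, 0 < `|s| < eta /\
    uncurryF F (fun i => if i == ord_max then pt x u i + s else pt x u i) = 0.
  move=> eta eta0; have [v [hv gv]] := acc eta eta0; exists (v - u); split => //.
  by rewrite pt_shift uncurry_pt (addrC u) subrK.
have hid := ident_core (m0 := ord_max) r0 HA Hacc.
exists r; split => // v hv; have := hid (v - u) hv.
by rewrite pt_shift uncurry_pt (addrC u) subrK.
Qed.
End Main.

Unset Implicit Arguments.
Theorem lemma2p3 (R : realType) (N : nat) (F : ('I_N -> R) -> R -> R) :
  analytic_nbhd F -> nonconstant F ->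
  forall eps : R, 0 < eps <= 1 -> Sigma_eps F eps !=set0 ->
  exists delta : R, 0 < delta <= 1 /\ inA F eps delta.
Proof.
move=> Han _ eps /andP[eps0 eps1] _.
apply: contrapT => hno.
pose dl n : R := (n.+1%:R)^-1.
have dl0 n : 0 < dl n by rewrite invr_gt0.
have dl1 n : dl n <= 1 by rewrite invf_le1 ?ler1n.
have bad : forall n, exists q : 'I_N.+1 -> R, [/\ Sigma_eps F eps (xof q), 0 <= q ord_max <= 1 &
    forall t, q ord_max - eps / 2 < t < q ord_max + eps / 2 -> ~ Fset F (xof q) (dl n) t].
  move=> n; apply: contrapT => hn; apply: hno; exists (dl n); split; first by rewrite dl0 dl1.
  split; [by rewrite eps0 eps1 | by rewrite dl0 dl1 |].
  move=> x hx xi hxi; apply: contrapT => ht; apply: hn.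
  exists (pt x xi); rewrite xof_pt pt_max; split => // t ht1 hF; apply: ht; by exists t.
have [u hu] := choice bad.
have hu01 : forall k i, 0 <= u k i <= 1.
  move=> k i; have [[cx _] hxi _] := hu k; case: (unliftP ord_max i) => [j ->|->] //.
  exact: cx j.
have [q [q01 hq]] := cube_cluster hu01.
set x := xof q; set xi := q ord_max.
have cx : cube x by move=> j; exact: q01.
have xi01 : 0 <= xi <= 1 by exact: q01.
have nS : ~ Sigma F x.
  move=> Sx.
  set d := eps / (N.+1)%:R.
  have d0 : 0 < d by rewrite divr_gt0.
  have [k [_ hk]] := hq d d0 0%N.
  have [[_ hS] _ _] := hu k.
  case: hS => [S0|hd].
    by move: Sx; rewrite S0.
  have hlb : has_lbound [set eucl (xof (u k)) y | y in Sigma F].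
    by exists 0 => _ [z _ <-]; exact: sqrtr_ge0.
  have hE : dist_set (xof (u k)) (Sigma F) <= eucl (xof (u k)) x.
    by apply: (ge_inf hlb); exists x.
  have hlt : eucl (xof (u k)) x < eps.
    rewrite /eucl -(ger0_norm (ltW eps0)) -sqrtr_sqr ltr_sqrt ?exprn_gt0 //.
    apply: (@le_lt_trans _ _ (\sum_(i < N) d ^+ 2)).
      apply: ler_sum => j _.
      rewrite -(ger0_norm (sqr_ge0 _)) normrX; apply: lerXn2r; rewrite ?nnegrE ?normr_ge0 ?(ltW d0) //.
      exact: (ltW (hk (lift ord_max j))).
    rewrite sumr_const card_ord -mulr_natr /d expr_div_n mulrAC ltr_pdivrMr ?exprn_gt0 //.
    rewrite ltr_pM2l ?exprn_gt0 // -natrX ltr_nat.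
    apply: (leq_trans (ltnSn N)); rewrite expnS expn1; exact: leq_pmull.
  by have := le_lt_trans (le_trans hd hE) hlt; rewrite ltxx.
set a := Num.max 0 (xi - eps / 2); set b := Num.min 1 (xi + eps / 2).
have hz : forall t, a < t < b -> F x t = 0.
  move=> t /andP[ta tb].
  move: ta tb; rewrite /a /b gt_max lt_min => /andP[t0 t1] /andP[t2 t3].
  apply/eqP; apply/negPn/negP => hne.
  set e := `|F x t|.
  have e0 : 0 < e by rewrite normr_gt0.
  have t01 : 0 <= t <= 1 by apply/andP; split; lra.
  have e2 : 0 < e / 2 by rewrite divr_gt0.
  have [rho [rho0 hrho]] := cont_x Han cx t01 e2.
  have [m _ hm] := near_infty_natSinv_lt (PosNum e2).
  have txi : `|t - xi| < eps / 2 by rewrite ltr_norml; apply/andP; split; lra.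
  set d := Num.min rho (eps / 2 - `|t - xi|).
  have d0 : 0 < d by rewrite lt_min rho0 /= subr_gt0.
  have [k [mk hk]] := hq d d0 m.
  have [_ hxi' hnF] := hu k.
  set y := xof (u k).
  have hyx : forall j, `|y j - x j| < rho.
    by move=> j; apply: lt_le_trans (hk _) _; rewrite ge_min lexx.
  have hc := hrho y hyx.
  have hxk : `|u k ord_max - xi| < eps / 2 - `|t - xi|.
    by apply: lt_le_trans (hk _) _; rewrite ge_min lexx orbT.
  have hd3 := ler_distD xi t (u k ord_max).
  have win : u k ord_max - eps / 2 < t < u k ord_max + eps / 2.
    have : `|t - u k ord_max| < eps / 2.
      apply: le_lt_trans hd3 _; rewrite (distrC xi); lra.
    rewrite ltr_norml => /andP[h1 h2]; apply/andP; split; lra.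
  have hF := hnF t win.
  have hFy : `|F y t| < dl k.
    by rewrite ltNge; apply/negP => h; apply: hF; split.
  have dlk : dl k < e / 2 := hm k mk.
  have hb : `|F x t| <= `|F y t| + `|F y t - F x t|.
    by have := ler_normD (F y t) (F x t - F y t); rewrite addrC subrK (distrC (F x t)).
  rewrite -/e in hb; lra.
have ab : a < b.
  rewrite /a /b lt_min !gt_max; apply/andP; split; apply/andP; split; lra.
have a0 : 0 <= a by rewrite /a le_max lexx.
have b1 : b <= 1 by rewrite /b ge_min lexx.
have := conn (locH_x Han cx) a0 ab b1 hz.
by move=> h; apply: nS; split.
Qed.
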